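(* In the setting $|H|=1$ of the context (with Assumption 1), the Shor relaxation is exact ($v^\star=c^\star$) if for every $I\subseteq M$ with $|I|\ge2$ the convex problem in the variables $(\mu_i)_{i\in I}$, $x_1$, $w_1$: $\min\ \sum_{j\in N\setminus\{1\}}x_j(\boldsymbol{\mu})^2+x_1^2-w_1$ subject to $d_1^*+\sum_{i\in I}\xi_i\mu_i=0$; $c_1+\sum_{i\in I}a_{i1}\mu_i=0$; $\xi_iw_1+2a_{i1}x_1+2\sum_{j\in N\setminus\{1\}}a_{ij}x_j(\boldsymbol{\mu})=b_i$ for $i\in I$; $\xi_iw_1+2a_{i1}x_1+2\sum_{j\in N\setminus\{1\}}a_{ij}x_j(\boldsymbol{\mu})\le b_i$ for $i\in M\setminus I$; $\mu_i\ge0$ for $i\in I$, (where $\mu_i=0$ for $i\in M\setminus I$) has nonnegative optimal value (with the convention that an infeasible problem has optimal value $+\infty$).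
   Context: Let $N=\{1,\dots,n\}$, $M=\{1,\dots,m\}$. Data: reals $D_{jj}$ ($j\in N$), $c_j$, $a_{ij}$, $b_i$, $\xi_i$ ($i\in M$, $j\in N$). The diagonal QCQP (P) is $c^\star=\inf\{\sum_{j}D_{jj}x_j^2+2\sum_jc_jx_j : \xi_i\sum_jx_j^2+2\sum_ja_{ij}x_j\le b_i,\ i\in M\}$, i.e. all constraint Hessians are ${\bf A}^i=\xi_i{\bf I}$. Its Shor relaxation is $v^\star=\inf\{{\bf D}\bullet{\bf X}+2{\bf c}^\top{\bf x} : \xi_i\,\mathrm{trace}({\bf X})+2{\bf a}_i^\top{\bf x}\le b_i\ (i\in M),\ {\bf X}-{\bf x}{\bf x}^\top\succeq{\bf O}\}$ with ${\bf D}=\mathrm{diag}(D_{jj})$. Assumption 1: (P) is feasible; some $\bar{\bf y}\ge0$ has $\sum_i\bar y_i\xi_i>0$; the Shor relaxation has a feasible point in the interior of its feasible region. It is assumed that $d_1^*=\min_{j\in N}D_{jj}$ is attained uniquely at $j=1$. For $j\in N\setminus\{1\}$, $x_j(\boldsymbol{\mu})=-\frac{c_j+\sum_{i\in M}a_{ij}\mu_i}{D_{jj}-d_1^*}$. *)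

(* Defs.v *)
From HB Require Import structures.
From mathcomp Require Import all_boot all_order all_algebra.
From mathcomp Require Import all_classical all_reals.
From mathcomp Require Import ereal.
Set Implicit Arguments. Unset Strict Implicit. Unset Printing Implicit Defensive.
Import Order.TTheory GRing.Theory Num.Theory.
Local Open Scope ring_scope.
Local Open Scope classical_set_scope.

(* Index j = 1 of the paper is ord0 : 'I_n.+1; N = 'I_n.+1, M = 'I_m.
   Data: D (diagonal of the objective Hessian), c, a, b, xi. *)
Section QCQP.
Variables (R : realType) (n m : nat).
Variables (D c : 'I_n.+1 -> R) (a : 'I_m -> 'I_n.+1 -> R) (b xi : 'I_m -> R).

Definition qobj (x : 'I_n.+1 -> R) : R :=
  \sum_j D j * x j ^+ 2 + 2 * \sum_j c j * x j.

Definition Pfeas (x : 'I_n.+1 -> R) : Prop :=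
  forall i : 'I_m, xi i * \sum_j x j ^+ 2 + 2 * \sum_j a i j * x j <= b i.

(* c^star (value in the extended reals; -oo if unbounded, +oo if infeasible). *)
Definition cstar : \bar R := ereal_inf [set (qobj x)%:E | x in Pfeas].

Definition psd (A : 'M[R]_n.+1) : Prop :=
  forall v : 'cV[R]_n.+1, 0 <= (v^T *m A *m v) 0 0.
Definition pd (A : 'M[R]_n.+1) : Prop :=
  forall v : 'cV[R]_n.+1, v != 0 -> 0 < (v^T *m A *m v) 0 0.

Definition outer (x : 'I_n.+1 -> R) : 'M[R]_n.+1 := \matrix_(i, j) (x i * x j).

Definition shor_obj (x : 'I_n.+1 -> R) (X : 'M[R]_n.+1) : R :=
  \sum_j D j * X j j + 2 * \sum_j c j * x j.

Definition Shor_feas (x : 'I_n.+1 -> R) (X : 'M[R]_n.+1) : Prop :=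
  [/\ X^T = X,
      (forall i : 'I_m, xi i * \tr X + 2 * \sum_j a i j * x j <= b i)
    & psd (X - outer x)].

Definition vstar : \bar R :=
  ereal_inf [set (shor_obj p.1 p.2)%:E | p in [set p | Shor_feas p.1 p.2]].

Definition Shor_interior (x : 'I_n.+1 -> R) (X : 'M[R]_n.+1) : Prop :=
  [/\ X^T = X,
      (forall i : 'I_m, xi i * \tr X + 2 * \sum_j a i j * x j < b i)
    & pd (X - outer x)].

Definition assumption1 : Prop :=
  [/\ exists x, Pfeas x,
      (exists ybar : 'I_m -> R, (forall i, 0 <= ybar i) /\ 0 < \sum_i ybar i * xi i)
    & exists x X, Shor_interior x X].

Definition d1 : R := D ord0.

Definition xmu (mu : 'I_m -> R) (j : 'I_n.+1) : R :=
  - (c j + \sum_i a i j * mu i) / (D j - d1).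

(* Feasible set of the convex subproblem for the index set I, in variables
   (mu_i)_{i in I} (encoded as mu : 'I_m -> R vanishing outside I), x1, w1. *)
Definition sub_feas (I : {set 'I_m}) (mu : 'I_m -> R) (x1 w1 : R) : Prop :=
 (forall i, i \notin I -> mu i = 0) /\
  [/\ d1 + \sum_(i in I) xi i * mu i = 0,
      c ord0 + \sum_(i in I) a i ord0 * mu i = 0,
      (forall i, i \in I ->
         xi i * w1 + 2 * a i ord0 * x1
           + 2 * \sum_(j | j != ord0) a i j * xmu mu j = b i),
      (forall i, i \notin I ->
         xi i * w1 + 2 * a i ord0 * x1
           + 2 * \sum_(j | j != ord0) a i j * xmu mu j <= b i)
    & (forall i, i \in I -> 0 <= mu i)].

Definition sub_obj (mu : 'I_m -> R) (x1 w1 : R) : R :=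
  \sum_(j | j != ord0) xmu mu j ^+ 2 + x1 ^+ 2 - w1.

(* Optimal value (inf over an empty set is +oo). *)
Definition sub_val (I : {set 'I_m}) : \bar R :=
  ereal_inf [set (sub_obj t.1.1 t.1.2 t.2)%:E
            | t in [set t | sub_feas I t.1.1 t.1.2 t.2]].

End QCQP.

(* Main.v *)
Require Import Defs.
From HB Require Import structures.
From mathcomp Require Import all_boot all_order all_algebra.
From mathcomp Require Import all_classical all_reals.
From mathcomp Require Import ereal.
From mathcomp Require Import all_analysis.
From mathcomp Require Import ring lra.
Import Order.TTheory GRing.Theory Num.Theory.
Import numFieldNormedType.Exports.
Local Open Scope ring_scope.
Section Farkas.
Variable R : realType.

Definition dotv {T : finType} (u v : T -> R) := \sum_t u t * v t.

Lemma dotv_lin (T : finType) (u w d : T -> R) (al : R) :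
  dotv (fun t => u t - al * w t) d = dotv u d - al * dotv w d.
Proof.
rewrite /dotv mulr_sumr -sumrB; apply: eq_bigr => t _; ring.
Qed.

Lemma dotv_linr (T : finType) (u d d' : T -> R) (al : R) :
  dotv u (fun t => d' t - al * d t) = dotv u d' - al * dotv u d.
Proof.
rewrite /dotv mulr_sumr -sumrB; apply: eq_bigr => t _; ring.
Qed.

Lemma farkas (T I : finType) (s : seq I) : forall (v : I -> T -> R) (c : T -> R),
  (exists lam : I -> R, [/\ forall i, 0 <= lam i, forall i, i \notin s -> lam i = 0
      & forall t, c t = \sum_i lam i * v i t])
  \/ (exists d : T -> R, (forall i, i \in s -> dotv (v i) d <= 0) /\ 0 < dotv c d).
Proof.
elim: s => [|k s IH] v c.
  case: (boolP [forall t, c t == 0]) => [/forallP c0|/forallPn [t0 ct0]].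
    left; exists (fun=> 0); split => // t; rewrite big1 ?(eqP (c0 t)) // => i _; by rewrite mul0r.
  right; exists c; split => //.
  rewrite /dotv (bigD1 t0) //=; apply: ltr_pwDl.
    by rewrite -expr2 lt0r sqrf_eq0 ct0 sqr_ge0.
  by apply: sumr_ge0 => i _; rewrite -expr2 sqr_ge0.
case: (IH v c) => [[lam [l0 ls lc]]|[d [dv dc]]].
  left; exists lam; split => // i; rewrite in_cons negb_or => /andP[_]; exact: ls.
case: (lerP (dotv (v k) d) 0) => [vk0|vkpos].
  right; exists d; split => // i; rewrite in_cons => /orP[/eqP->//|]; exact: dv.
set r := dotv (v k) d.
pose v' i t := v i t - (dotv (v i) d / r) * v k t.
pose c' t := c t - (dotv c d / r) * v k t.
case: (IH v' c') => [[lam [l0 ls lc]]|[d' [dv' dc']]].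
  pose ka := (dotv c d - \sum_i lam i * dotv (v i) d) / r.
  have kapos : 0 < ka.
    apply: divr_gt0 => //; rewrite subr_gt0; apply: le_lt_trans dc.
    apply: sumr_le0 => i _.
    case: (boolP (i \in s)) => [/dv iin|/ls ->]; last by rewrite mul0r.
    by rewrite mulr_ge0_le0.
  left; exists (fun i => lam i + (if i == k then ka else 0)); split.
  - by move=> i; apply: addr_ge0 => //; case: ifP => // _; exact: ltW.
  - move=> i; rewrite in_cons negb_or => /andP[/negbTE -> /ls ->]; by rewrite addr0.
  - move=> t; have := lc t; rewrite /c' /v' => ct.
    have -> : c t = \sum_i lam i * (v i t - dotv (v i) d / r * v k t) + dotv c d / r * v k t.
      by rewrite -ct; ring.
    rewrite [RHS](eq_bigr (fun i => lam i * v i t + (if i == k then ka else 0) * v i t)); last first.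
      by move=> i _; rewrite mulrDl.
    rewrite big_split /=.
    have -> : \sum_i (if i == k then ka else 0) * v i t = ka * v k t.
      by rewrite (bigD1 k) //= eqxx big1 ?addr0 // => i /negbTE ->; rewrite mul0r.
    rewrite /ka.
    rewrite (eq_bigr (fun i => lam i * v i t - (lam i * dotv (v i) d) / r * v k t)); last first.
      by move=> i _; rewrite mulrBr; congr (_ - _); rewrite !mulrA mulrAC.
    rewrite sumrB -mulr_suml -mulr_suml.
    have rne : r != 0 by rewrite gt_eqF.
    field; exact: rne.
right; exists (fun t => d' t - (dotv (v k) d' / r) * d t); split; last first.
  by rewrite dotv_linr -/r; move: dc'; rewrite /c' dotv_lin; congr (0 < _); field; rewrite gt_eqF.
move=> i; rewrite in_cons => /orP[/eqP->|iin].
  by rewrite dotv_linr -/r mulfVK ?gt_eqF // subrr.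
rewrite dotv_linr; move: (dv' i iin); rewrite /v' dotv_lin.
suff -> : dotv (v i) d' - dotv (v k) d' / r * dotv (v i) d =
  dotv (v i) d' - dotv (v i) d / r * dotv (v k) d' by [].
by congr (_ - _); ring.
Qed.
End Farkas.
Arguments dotv {R T}.
Arguments farkas {R T I}.

Lemma cont_quad (R : realType) (A B C : R) : continuous (fun t : R => A + t * B - t ^+ 2 * C).
Proof.
move=> t.
apply: cvgB; first apply: cvgD.
- exact: cvg_cst.
- apply: cvgM; [exact: cvg_id| exact: cvg_cst].
- apply: cvgM; last exact: cvg_cst.
  rewrite /=. under eq_fun do rewrite expr2.
  apply: cvgM; exact: cvg_id.
Qed.
Section Slice.
Variables (R : realType) (m : nat) (L : 'I_m -> R -> R -> R) (e f mu : 'I_m -> R).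
Hypothesis Laff : forall i u v du dv t,
  L i (u + t * du) (v + t * dv) = L i u v + t * (e i * du + f i * dv).
Definition Gd u v := (forall i, L i u v <= 0) /\ (forall i, mu i != 0 -> L i u v = 0).
Hypothesis Gbound : forall u v, Gd u v -> u ^+ 2 < v.

Lemma escape (u v du dv : R) : (du != 0) || (dv < 0) ->
  ~ (forall t, 0 <= t -> (u + t * du) ^+ 2 < v + t * dv).
Proof.
move=> hd H.
case: (eqVneq du 0) => [du0|dun0].
  move: hd; rewrite du0 eqxx /= => dvn.
  pose t := (`|v| + 1) / (- dv).
  have t0 : 0 <= t by apply: divr_ge0; [apply: addr_ge0 | rewrite oppr_ge0 ltW].
  have h := H t t0.
  have : t * dv = - (`|v| + 1) by rewrite /t; field; rewrite ?oppr_eq0 lt_eqF.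
  move=> h2; move: h; rewrite h2 du0 mulr0 addr0.
  have := ler_norm v; have := sqr_ge0 u; lra.
pose K := `|2 * u * du| + `|dv| + `|v|.
have d2 : 0 < du ^+ 2 by rewrite lt_def sqr_ge0 sqrf_eq0 dun0.
pose t := 1 + K / du ^+ 2.
have K0 : 0 <= K by rewrite /K !addr_ge0.
have t1 : 1 <= t by rewrite /t lerDl divr_ge0 // ltW.
have tdu : t * du ^+ 2 = du ^+ 2 + K by rewrite /t; field; rewrite ?dun0 ?gt_eqF.
have h := H t (le_trans ler01 t1).
have e1 : (u + t * du) ^+ 2 = u ^+ 2 + t * (2 * u * du) + t * (t * du ^+ 2) by ring.
rewrite e1 tdu in h.
have := ler_norm (2 * u * du); have := ler_norm dv; have := ler_norm v; have := sqr_ge0 u.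
have : - (t * `|2 * u * du|) <= t * (2 * u * du).
  rewrite -mulrN; apply: ler_wpM2l; first exact: le_trans ler01 t1.
  by rewrite lerNl -normrN ler_norm.
have : t * dv <= t * `|dv| by apply: ler_wpM2l; [exact: le_trans ler01 t1|exact: ler_norm].
rewrite /K !mulrDr in h.
have : `|v| <= t * `|v| by rewrite ler_peMl.
have : 0 < t * du ^+ 2 by apply: mulr_gt0 => //; apply: lt_le_trans t1.
lra.
Qed.

Definition Act u v := [set i | L i u v == 0].

Lemma move_pt (u v du dv : R) : Gd u v -> (du != 0) || (dv < 0) ->
  (forall i, L i u v = 0 -> e i * du + f i * dv = 0) ->
  exists u' v', [/\ Gd u' v', (forall i, L i u v = 0 -> L i u' v' = 0) &
     exists i0, L i0 u v != 0 /\ L i0 u' v' = 0].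
Proof.
move=> [G1 G2] hd hr.
pose rt i := e i * du + f i * dv.
pose J i := (L i u v != 0) && (0 < rt i).
have stay t i : 0 <= t -> ~~ J i -> L i (u + t * du) (v + t * dv) <= 0 /\
     (L i u v = 0 -> L i (u + t * du) (v + t * dv) = 0).
  move=> t0 Ji; rewrite Laff -/(rt i).
  case: (eqVneq (L i u v) 0) => [L0|Ln0].
    by rewrite L0 /rt (hr i L0) mulr0 addr0; split.
  move: Ji; rewrite /J Ln0 /= -leNgt => r0; split; last by move=> h; move: Ln0; rewrite h eqxx.
  have := G1 i; have : t * rt i <= 0 by rewrite mulr_ge0_le0.
  move=> h1 h2; lra.
case: (boolP [exists i, J i]) => [/existsP [j0 Jj0]|/existsPn noJ].
  have [i1 Ji1 mini1] : exists2 i1, J i1 & forall i, J i -> - L i1 u v / rt i1 <= - L i u v / rt i.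
    by case: (@arg_minP _ R _ j0 J (fun i => - L i u v / rt i) Jj0) => i Ji mi; exists i.
  pose t := - L i1 u v / rt i1.
  move: (Ji1); rewrite /J => /andP[L1n r1].
  have t0 : 0 <= t by apply: divr_ge0; [rewrite oppr_ge0 G1 | exact: ltW].
  have Ls i : L i (u + t * du) (v + t * dv) <= 0 /\
     (L i u v = 0 -> L i (u + t * du) (v + t * dv) = 0).
    case: (boolP (J i)) => [Ji|Ji]; last exact: stay.
    move: (Ji); rewrite /J => /andP[Ln ri]; split; last by move=> h; move: Ln; rewrite h eqxx.
    rewrite Laff -/(rt i).
    have := mini1 i Ji; rewrite -/t ler_pdivlMr // => h.
    lra.
  exists (u + t * du), (v + t * dv); split.
  - split => i; first by case: (Ls i).
    move=> /G2 h; by case: (Ls i) => _ /(_ h).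
  - by move=> i /(proj2 (Ls i)).
  - exists i1; split => //; rewrite Laff -/(rt i1) /t mulrAC -mulrA divrr ?mulr1 ?addrN //.
    by rewrite unitfE gt_eqF.
exfalso.
apply: (@escape u v du dv hd) => t t0.
have Gt : Gd (u + t * du) (v + t * dv).
  split => i; first by case: (stay t i t0 (noJ i)).
  by move=> /G2 h; case: (stay t i t0 (noJ i)) => _ /(_ h).
exact: Gbound Gt.
Qed.

Lemma vertex u v : Gd u v -> exists u' v', Gd u' v' /\ (1 < #|Act u' v'|)%N.
Proof.
move=> G.
have step1 : forall u v, Gd u v -> exists u' v', Gd u' v' /\ (0 < #|Act u' v'|)%N.
  move=> u0 v0 G0; case: (posnP #|Act u0 v0|) => [c0|cp]; last by exists u0, v0.
  have noact i : L i u0 v0 != 0.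
    apply/negP => /eqP h; move/eqP: c0; rewrite cards_eq0 => /eqP e0.
    have : i \in Act u0 v0 by rewrite inE h.
    by rewrite e0 inE.
  have [u1 [v1 [G1 _ [i0 [_ h0]]]]] := @move_pt u0 v0 1 0 G0 (introT orP (or_introl (oner_neq0 R))) (fun i h => False_ind _ (negP (noact i) (introT eqP h))).
  exists u1, v1; split => //; apply/card_gt0P; exists i0; by rewrite inE h0.
have [u1 [v1 [G1 c1]]] := step1 u v G.
case: (ltnP 1 #|Act u1 v1|) => [c2|c2]; first by exists u1, v1.
have /cards1P [i Ai] : #|Act u1 v1| == 1%N by rewrite eqn_leq c2 c1.
have Li : L i u1 v1 = 0.
  have : i \in Act u1 v1 by rewrite Ai inE.
  by rewrite inE => /eqP.
have onlyi k : L k u1 v1 = 0 -> k = i.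
  move=> h; have : k \in Act u1 v1 by rewrite inE h.
  by rewrite Ai inE => /eqP.
pose du := if f i != 0 then f i else 0.
pose dv := if f i != 0 then - e i else -1.
have hd : (du != 0) || (dv < 0).
  by rewrite /du /dv; case: ifP => [->//|_]; rewrite eqxx /= ltrN10.
have hr k : L k u1 v1 = 0 -> e k * du + f k * dv = 0.
  move=> /onlyi ->; rewrite /du /dv; case: ifP => [_|/negbFE/eqP ->]; first by ring.
  by rewrite mulr0 mul0r addr0.
have [u2 [v2 [G2 keep [i0 [n0 h0]]]]] := @move_pt u1 v1 du dv G1 hd hr.
exists u2, v2; split => //; apply/card_gt1P; exists i, i0; rewrite !inE h0 keep // eqxx; split => //.
by apply: contraNneq n0 => <-; rewrite Li.
Qed.
End Slice.
Arguments Gd {R m}.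
Arguments Act {R m}.
Arguments vertex {R m L e f mu} Laff Gbound {u v}.
Section Main.
Variables (R : realType) (n m : nat) (D c : 'I_n.+1 -> R) (a : 'I_m -> 'I_n.+1 -> R) (b xi : 'I_m -> R).

Local Notation D0 := (D ord0).
Definition sq (x : 'I_n.+1 -> R) := \sum_j x j ^+ 2.
Definition Lc i (x : 'I_n.+1 -> R) w := \sum_j 2 * a i j * x j + xi i * w - b i.
Definition gq (x : 'I_n.+1 -> R) w := \sum_j ((D j - D0) * x j ^+ 2 + 2 * c j * x j) + D0 * w.
Definition inP x w := forall i, Lc i x w <= 0.
Definition inK x w := inP x w /\ sq x <= w.

Lemma sum3 {I : finType} (f g h k : I -> R) : (forall j, f j = g j + h j - k j) ->
  \sum_j f j = \sum_j g j + \sum_j h j - \sum_j k j.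
Proof. by move=> H; rewrite -big_split -sumrB; apply: eq_bigr => j _; rewrite H. Qed.

Lemma sum2 {I : finType} (f g h : I -> R) : (forall j, f j = g j + h j) ->
  \sum_j f j = \sum_j g j + \sum_j h j.
Proof. by move=> H; rewrite -big_split; apply: eq_bigr => j _; rewrite H. Qed.

Lemma qobj_g x : qobj D c x = gq x (sq x).
Proof.
by rewrite /qobj /gq /sq !mulr_sumr -!big_split /=; apply: eq_bigr => j _; ring.
Qed.

Lemma Lc_form i x w : Lc i x w = xi i * w + 2 * \sum_j a i j * x j - b i.
Proof. by rewrite /Lc mulr_sumr; congr (_ - _); rewrite addrC; congr (_ + _); apply: eq_bigr => j _; rewrite mulrA. Qed.

Lemma Pfeas_iff x : Pfeas a b xi x <-> inP x (sq x).
Proof.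
rewrite /Pfeas /inP; split=> H i; have := H i; rewrite Lc_form /sq.
  by rewrite subr_le0.
by rewrite subr_le0.
Qed.

Definition segx (xp xq : 'I_n.+1 -> R) t := fun j => xp j + t * (xq j - xp j).
Definition segw (wp wq : R) t := wp + t * (wq - wp).

Lemma Lc_seg i xp wp xq wq t :
  Lc i (segx xp xq t) (segw wp wq t) = (1 - t) * Lc i xp wp + t * Lc i xq wq.
Proof.
rewrite /Lc /segx /segw.
rewrite (@sum3 _ _ (fun j => 2 * a i j * xp j) (fun j => t * (2 * a i j * xq j))
   (fun j => t * (2 * a i j * xp j))); last by move=> j; ring.
rewrite -!mulr_sumr; ring.
Qed.

Lemma g_seg xp wp xq wq t :
  gq (segx xp xq t) (segw wp wq t) = (1 - t) * gq xp wp + t * gq xq wq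
    - t * (1 - t) * \sum_j (D j - D0) * (xq j - xp j) ^+ 2.
Proof.
rewrite /gq /segx /segw.
rewrite (@sum3 _ _ (fun j => (1 - t) * ((D j - D0) * xp j ^+ 2 + 2 * c j * xp j))
   (fun j => t * ((D j - D0) * xq j ^+ 2 + 2 * c j * xq j))
   (fun j => t * (1 - t) * ((D j - D0) * (xq j - xp j) ^+ 2))); last by move=> j; ring.
rewrite -!mulr_sumr; ring.
Qed.

Lemma sq_seg xp xq t :
  sq (segx xp xq t) = sq xp + t * (2 * \sum_j xp j * (xq j - xp j)) + t ^+ 2 * sq (fun j => xq j - xp j).
Proof.
rewrite /sq /segx mulr_sumr.
rewrite (@sum3 _ _ (fun j => xp j ^+ 2) (fun j => t * (2 * (xp j * (xq j - xp j))))
  (fun j => - (t ^+ 2 * (xq j - xp j) ^+ 2))); last by move=> j; ring.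
rewrite sumrN -!mulr_sumr; ring.
Qed.


Hypothesis hD : forall j, 0 <= D j - D0.

Lemma sq_ge0 x : 0 <= sq x.
Proof. by apply: sumr_ge0 => j _; rewrite sqr_ge0. Qed.

Lemma above xp wp xq wq :
  inK xp wp ->
  (forall x, inP x (sq x) -> gq xp wp < gq x (sq x)) ->
  inP xq wq -> gq xq wq <= gq xp wp -> sq xq < wq.
Proof.
move=> [Pp Kp] gap Pq gq_le.
have ltp : sq xp < wp.
  rewrite lt_neqAle Kp andbT; apply/negP => /eqP E.
  by move: (gap xp); rewrite E ltxx => /(_ Pp).
rewrite ltNge; apply/negP => leq.
pose A := wp - sq xp.
pose B := wq - wp - 2 * \sum_j xp j * (xq j - xp j).
pose C := sq (fun j => xq j - xp j).
have fE t : segw wp wq t - sq (segx xp xq t) = A + t * B - t ^+ 2 * C.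
  by rewrite sq_seg /segw /A /B /C; ring.
have [t t01 ft0] : exists2 t, t \in `[0, 1] & A + t * B - t ^+ 2 * C = 0.
  apply: IVT => //; first by apply: continuous_subspaceT; exact: cont_quad.
  have f0 : A + 0 * B - 0 ^+ 2 * C = A by ring.
  have f1 : A + 1 * B - 1 ^+ 2 * C = wq - sq xq.
    by rewrite -fE /segw /segx mul1r; congr (_ - sq _); [ring|apply: funext => j; ring].
  rewrite f0 f1.
  have A0 : 0 < A by rewrite /A subr_gt0.
  have B0 : wq - sq xq <= 0 by rewrite subr_le0.
  rewrite ge_min le_max; apply/andP; split; apply/orP; [right|left]; first exact: B0.
  exact: ltW.
move: t01; rewrite in_itv /= => /andP[t0 t1].
set xt := segx xp xq t; set wt := segw wp wq t.
have Pt : inP xt (sq xt).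
  have -> : sq xt = wt by apply/eqP; rewrite eq_sym -subr_eq0 /wt /xt fE ft0.
  move=> i; rewrite /xt /wt Lc_seg.
  have := Pp i; have := Pq i; nra.
have := gap xt Pt.
have -> : sq xt = wt by apply/eqP; rewrite eq_sym -subr_eq0 /wt /xt fE ft0.
rewrite /xt /wt g_seg.
have S0 : 0 <= \sum_j (D j - D0) * (xq j - xp j) ^+ 2.
  by apply: sumr_ge0 => j _; apply: mulr_ge0 => //; rewrite sqr_ge0.
have T0 : 0 <= t * (1 - t) by apply: mulr_ge0 => //; rewrite subr_ge0.
have := mulr_ge0 T0 S0.
have : t * gq xq wq <= t * gq xp wp by apply: ler_wpM2l.
move=> h1 h2 h3. 
have : (1 - t) * gq xp wp + t * gq xq wq - t * (1 - t) * \sum_j (D j - D0) * (xq j - xp j) ^+ 2 <= gq xp wp.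
  by rewrite -subr_ge0; rewrite -subr_ge0 in h1; nra.
by rewrite leNgt h3.
Qed.

Definition wid (j : 'I_n.+1) : 'I_n.+2 := widen_ord (leqnSn n.+1) j.
Definition mkz (fx : 'I_n.+1 -> R) (fw : R) : 'I_n.+2 -> R :=
  fun k => if (k < n.+1)%N then fx (inord k) else fw.
Lemma mkz_wid fx fw j : mkz fx fw (wid j) = fx j.
Proof. by rewrite /mkz /wid /= ltn_ord; congr fx; apply: val_inj; rewrite /= inordK. Qed.
Lemma mkz_max fx fw : mkz fx fw ord_max = fw.
Proof. by rewrite /mkz /= ltnn. Qed.
Lemma dot_split (u d : 'I_n.+2 -> R) :
  dotv u d = \sum_j u (wid j) * d (wid j) + u ord_max * d ord_max.
Proof. by rewrite /dotv big_ord_recr. Qed.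

Definition shift (x dx : 'I_n.+1 -> R) t := fun j => x j + t * dx j.

Lemma Lc_shift i x w dx dw t :
  Lc i (shift x dx t) (w + t * dw) = Lc i x w + t * (\sum_j 2 * a i j * dx j + xi i * dw).
Proof.
rewrite /Lc /shift (@sum2 _ _ (fun j => 2 * a i j * x j) (fun j => t * (2 * a i j * dx j))); last by move=> j; ring.
rewrite -mulr_sumr; ring.
Qed.

Lemma g_shift x w dx dw t :
  gq (shift x dx t) (w + t * dw) = gq x w
   + t * (\sum_j 2 * ((D j - D0) * x j + c j) * dx j + D0 * dw)
   + t ^+ 2 * \sum_j (D j - D0) * dx j ^+ 2.
Proof.
rewrite /gq /shift.
rewrite (@sum3 _ _ (fun j => (D j - D0) * x j ^+ 2 + 2 * c j * x j)
   (fun j => t * (2 * ((D j - D0) * x j + c j) * dx j)) (fun j => - (t ^+ 2 * ((D j - D0) * dx j ^+ 2))));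
  last by move=> j; ring.
rewrite sumrN -!mulr_sumr; ring.
Qed.

Lemma kkt xs ws : inP xs ws -> (forall x w, inP x w -> gq xs ws <= gq x w) ->
 exists mu : 'I_m -> R, [/\ forall i, 0 <= mu i, forall i, mu i != 0 -> Lc i xs ws = 0,
    D0 + \sum_i mu i * xi i = 0
  & forall j, (D j - D0) * xs j + c j + \sum_i mu i * a i j = 0].
Proof.
move=> Ps mins.
pose s := [seq i <- enum 'I_m | Lc i xs ws == 0].
pose v i := mkz (fun j => 2 * a i j) (xi i).
pose cv := mkz (fun j => - (2 * ((D j - D0) * xs j + c j))) (- D0).
have memS i : (i \in s) = (Lc i xs ws == 0) by rewrite mem_filter mem_enum andbT.
case: (farkas s v cv) => [[lam [l0 ls lc]]|[d [dv dc]]].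
  exists lam; split => //.
  - move=> i; apply: contraNeq => iS; apply/eqP; apply: ls; by rewrite memS.
  - have := lc ord_max; rewrite /cv /v mkz_max.
    under eq_bigr do rewrite mkz_max.
    by move=> h; rewrite -h addrN.
  - move=> j; have := lc (wid j); rewrite /cv /v mkz_wid.
    under eq_bigr do rewrite mkz_wid.
    move=> h.
    have h2 : \sum_i lam i * (2 * a i j) = 2 * \sum_i lam i * a i j.
      by rewrite mulr_sumr; apply: eq_bigr => i _; ring.
    rewrite h2 in h.
    have : 2 * ((D j - D0) * xs j + c j + \sum_i lam i * a i j) = 0 by rewrite mulrDr -h; ring.
    by move/eqP; rewrite mulf_eq0 pnatr_eq0 /= => /eqP.
exfalso.
pose dx j := d (wid j). pose dw := d ord_max.
have rE i : dotv (v i) d = \sum_j 2 * a i j * dx j + xi i * dw.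
  by rewrite dot_split /v mkz_max; under eq_bigr do rewrite mkz_wid.
pose al := dotv cv d.
have alE : - al = \sum_j 2 * ((D j - D0) * xs j + c j) * dx j + D0 * dw.
  rewrite /al dot_split /cv mkz_max; under eq_bigr do rewrite mkz_wid.
  by rewrite /dx /dw opprD -sumrN; congr (_ + _); [apply: eq_bigr => j _; ring | ring].
pose Q := \sum_j (D j - D0) * dx j ^+ 2.
have Q0 : 0 <= Q by apply: sumr_ge0 => j _; apply: mulr_ge0 => //; rewrite sqr_ge0.
pose sl i := if Lc i xs ws < 0 then `|dotv (v i) d| / (- Lc i xs ws) else 0.
have sl0 i : 0 <= sl i.
  rewrite /sl; case: ifP => // h; apply: divr_ge0 => //; rewrite oppr_ge0 ltW //.
pose S := \sum_i sl i.
have S0 : 0 <= S by apply: sumr_ge0.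
have slS i : sl i <= S by rewrite /S (bigD1 i) //= lerDl sumr_ge0.
pose M := 1 + 2 * Q / al + S.
have M1 : 1 <= M by rewrite /M -addrA lerDl addr_ge0 // divr_ge0 // ?mulr_ge0 // ltW.
have M0 : 0 < M by apply: lt_le_trans M1.
pose t := M^-1.
have t0 : 0 < t by rewrite invr_gt0.
have Pn : inP (shift xs dx t) (ws + t * dw).
  move=> i; rewrite Lc_shift -rE.
  have := Ps i; rewrite le_eqVlt => /orP[/eqP Li|Li].
    rewrite Li add0r; apply: mulr_ge0_le0; first exact: ltW.
    by apply: dv; rewrite memS Li.
  have : sl i <= M by apply: le_trans (slS i) _; rewrite /M lerDr addr_ge0 // divr_ge0 // ?mulr_ge0 // ltW.
  rewrite /sl Li ler_pdivrMr ?oppr_gt0 // => h.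
  have : t * `|dotv (v i) d| <= - Lc i xs ws.
    by rewrite /t mulrC ler_pdivrMr // mulrC.
  have := ler_norm (dotv (v i) d).
  move=> h1 h2; have : t * dotv (v i) d <= t * `|dotv (v i) d| by apply: ler_wpM2l => //; exact: ltW.
  lra.
have := mins _ _ Pn; rewrite g_shift -/Q.
have : t * Q <= al / 2.
  have : 2 * Q / al <= M by rewrite /M; lra.
  rewrite ler_pdivrMr // => h.
  rewrite /t mulrC (ler_pdivrMr _ _ M0); nra.
move=> h; rewrite -alE.
have : t * (t * Q) <= t * (al / 2) by apply: ler_wpM2l => //; exact: ltW.
have : 0 < t * al by apply: mulr_gt0.
move=> h1 h2 h3.
have : gq xs ws + t * - al + t ^+ 2 * Q < gq xs ws by rewrite expr2; nra.
by rewrite ltNge h3.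
Qed.

Section Bound.
Variable ybar : 'I_m -> R.
Hypothesis yb0 : forall i, 0 <= ybar i.
Hypothesis ybs : 0 < \sum_i ybar i * xi i.

Lemma abs_le_of_sq (y Y : R) : 0 <= Y -> y ^+ 2 <= Y -> `|y| <= 1 + Y.
Proof.
move=> Y0 h; rewrite leNgt; apply/negP => h2.
have h3 : 1 <= `|y| by apply: le_trans (ltW h2); rewrite lerDl.
have : `|y| ^+ 2 = y ^+ 2 by rewrite real_normK // num_real.
have : `|y| <= `|y| ^+ 2 by rewrite expr2 ler_peMl // (le_trans ler01 h3).
lra.
Qed.

Lemma Kbound : exists M, forall x w, inK x w -> (forall j, `|x j| <= M) /\ `|w| <= M.
Proof.
set sg := \sum_i ybar i * xi i.
pose ab j := \sum_i ybar i * a i j.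
pose be := \sum_i ybar i * b i.
pose Y := sg * be + \sum_j ab j ^+ 2.
pose A1 := \sum_j `|ab j|.
pose Mx := (1 + `|Y| + A1) / sg.
pose M := Mx + (`|be| + 2 * Mx * A1) / sg.
have A10 : 0 <= A1 by apply: sumr_ge0.
have Mx0 : 0 <= Mx by apply: divr_ge0; [have := normr_ge0 Y; lra| exact: ltW].
have M2 : 0 <= (`|be| + 2 * Mx * A1) / sg.
  apply: divr_ge0; last exact: ltW.
  by apply: addr_ge0 => //; apply: mulr_ge0 => //; apply: mulr_ge0.
exists M => x w [Pxw Kxw].
have comb : sg * w + 2 * \sum_j ab j * x j <= be.
  have : \sum_i ybar i * Lc i x w <= 0.
    by apply: sumr_le0 => i _; apply: mulr_ge0_le0.
  have -> : \sum_i ybar i * Lc i x w = 2 * \sum_j ab j * x j + sg * w - be.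
    rewrite /Lc /ab /sg /be.
    have -> : \sum_j (\sum_i ybar i * a i j) * x j = \sum_i ybar i * \sum_j a i j * x j.
      rewrite (eq_bigr (fun j => \sum_i ybar i * a i j * x j)); last by move=> j _; rewrite mulr_suml.
      rewrite exchange_big /=; apply: eq_bigr => i0 _; rewrite mulr_sumr.
      by apply: eq_bigr => j0 _; rewrite mulrA.
    rewrite mulr_sumr (@sum3 _ _ (fun i => 2 * (ybar i * \sum_j a i j * x j)) (fun i => ybar i * xi i * w)
       (fun i => ybar i * b i)); last first.
      move=> i; rewrite /Lc.
      have -> : \sum_j 2 * a i j * x j = 2 * \sum_j a i j * x j.
        by rewrite mulr_sumr; apply: eq_bigr => j _; ring.
      ring.
    by rewrite -mulr_sumr -mulr_suml.
  lra.
have sqx0 := sq_ge0 x.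
have comb2 : sg * sq x + 2 * \sum_j ab j * x j <= be.
  apply: le_trans comb; rewrite lerD2r; apply: ler_wpM2l => //; exact: ltW.
have Ysum : \sum_j (sg * x j + ab j) ^+ 2 <= Y.
  have -> : \sum_j (sg * x j + ab j) ^+ 2 = sg * (sg * sq x + 2 * \sum_j ab j * x j) + \sum_j ab j ^+ 2.
    rewrite /sq mulrDr !mulr_sumr -!big_split /=.
    apply: eq_bigr => j _; ring.
  rewrite /Y lerD2r; apply: ler_wpM2l => //; exact: ltW.
have Y0 : 0 <= Y by apply: (le_trans _ Ysum); apply: sumr_ge0 => j _; rewrite sqr_ge0.
have xb j : `|x j| <= Mx.
  have h1 : (sg * x j + ab j) ^+ 2 <= Y.
    apply: (le_trans _ Ysum); rewrite (bigD1 j) //= lerDl; apply: sumr_ge0 => k _; exact: sqr_ge0.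
  have h2 := @abs_le_of_sq _ _ Y0 h1.
  have h3 : `|ab j| <= A1 by rewrite /A1 (bigD1 j) //= lerDl sumr_ge0.
  rewrite /Mx ler_pdivlMr //.
  have e1 : `|x j| * sg = `|sg * x j| by rewrite normrM (gtr0_norm ybs) mulrC.
  have := ler_normD (sg * x j + ab j) (- ab j); rewrite normrN addrK.
  have := ger0_norm Y0; lra.
split => [j|].
  by apply: le_trans (xb j) _; rewrite /M lerDl.
have w0 : 0 <= w by apply: le_trans Kxw.
rewrite ger0_norm //.
have hs : `|\sum_j ab j * x j| <= Mx * A1.
  apply: le_trans (ler_norm_sum _ _ _) _; rewrite /A1 mulr_sumr; apply: ler_sum => j _.
  by rewrite normrM mulrC; apply: ler_wpM2r => //.
have hw : sg * w <= `|be| + 2 * Mx * A1.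
  have := ler_norm be; have := ler_norm (- (\sum_j ab j * x j)); rewrite normrN; lra.
have : w <= (`|be| + 2 * Mx * A1) / sg by rewrite ler_pdivlMr // mulrC.
rewrite /M; lra.
Qed.
End Bound.
Section Compact.
Local Open Scope classical_set_scope.
Local Notation V := 'rV[R]_(n.+2).
Definition ex (z : V) : 'I_n.+1 -> R := fun j => z ord0 (wid j).
Definition ew (z : V) : R := z ord0 ord_max.
Definition mkrow x w : V := \row_k mkz x w k.
Lemma ex_mkrow x w : ex (mkrow x w) = x.
Proof. by apply: funext => j; rewrite /ex /mkrow mxE mkz_wid. Qed.
Lemma ew_mkrow x w : ew (mkrow x w) = w.
Proof. by rewrite /ew /mkrow mxE mkz_max. Qed.

Lemma cont_sum (I : finType) (P : pred I) (F : I -> V -> R) :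
  (forall i, continuous (F i)) -> continuous (fun z => \sum_(i | P i) F i z).
Proof.
move=> Fc; rewrite -fct_sumE; apply: (big_ind (fun f : V -> R => continuous f)).
- exact: cst_continuous.
- by move=> f g fc gc z; apply: continuousD; [exact: fc|exact: gc].
- by move=> i _; exact: Fc.
Qed.

Lemma cont_coord k : continuous (fun z : V => z ord0 k).
Proof. exact: coord_continuous. Qed.

Lemma contD (f g : V -> R) : continuous f -> continuous g -> continuous (fun z => f z + g z).
Proof. by move=> fc gc z; apply: (@continuousD _ _ _ f g); [exact: fc|exact: gc]. Qed.
Lemma contB (f g : V -> R) : continuous f -> continuous g -> continuous (fun z => f z - g z).
Proof. by move=> fc gc z; apply: (@continuousB _ _ _ f g); [exact: fc|exact: gc]. Qed.
Lemma contM (f g : V -> R) : continuous f -> continuous g -> continuous (fun z => f z * g z).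
Proof. by move=> fc gc z; apply: (@continuousM _ _ f g); [exact: fc|exact: gc]. Qed.
Lemma contC (r : R) : continuous (fun z : V => r).
Proof. exact: cst_continuous. Qed.
Lemma contS (f : V -> R) : continuous f -> continuous (fun z => f z ^+ 2).
Proof. by move=> fc; under eq_fun do rewrite expr2; apply: contM. Qed.

Lemma cont_F : continuous (fun z => gq (ex z) (ew z)).
Proof.
apply: contD; last by apply: contM; [exact: contC| exact: cont_coord].
apply: cont_sum => j; apply: contD; apply: contM; try exact: contC.
  by apply: contS; exact: cont_coord.
exact: cont_coord.
Qed.

Lemma cont_L i : continuous (fun z => Lc i (ex z) (ew z)).
Proof.
apply: contB; last exact: contC.
apply: contD; last by apply: contM; [exact: contC| exact: cont_coord].
by apply: cont_sum => j; apply: contM; [exact: contC| exact: cont_coord].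
Qed.

Lemma cont_S : continuous (fun z => sq (ex z) - ew z).
Proof.
apply: contB; last exact: cont_coord.
by apply: cont_sum => j; apply: contS; exact: cont_coord.
Qed.

Lemma closed_sub (f : V -> R) : continuous f -> closed [set z | f z <= 0].
Proof.
move=> fc; apply: (@preimage_closed _ _ f [set x : R | x <= 0]).
  by move=> z _; exact: fc.
exact: closed_le.
Qed.

Lemma ord_cases (k : 'I_n.+2) : (exists j, k = wid j) \/ k = ord_max.
Proof.
case: (ltnP k n.+1) => h; first by left; exists (Ordinal h); apply: val_inj.
by right; apply: val_inj => /=; apply/eqP; rewrite eqn_leq h -ltnS ltn_ord.
Qed.

Lemma exists_min (ybar : 'I_m -> R) : (forall i, 0 <= ybar i) -> 0 < \sum_i ybar i * xi i ->
  forall xp wp, inK xp wp ->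
  exists xs ws, inK xs ws /\ forall x w, inK x w -> gq xs ws <= gq x w.
Proof.
move=> yb0 ybs xp wp Kp.
have [M HM] := @Kbound ybar yb0 ybs.
pose Kr := [set z : V | inK (ex z) (ew z)].
have Kr_cl : closed Kr.
  have -> : Kr = \bigcap_(i in [set: 'I_m]) [set z | Lc i (ex z) (ew z) <= 0] `&` [set z | sq (ex z) - ew z <= 0].
    apply/seteqP; split => z /=.
      by move=> [P1 P2]; split; [move=> i _; exact: P1 | rewrite subr_le0].
    by move=> [P1 P2]; split; [move=> i; exact: P1 | rewrite -subr_le0].
  apply: closedI; last exact/closed_sub/cont_S.
  by apply: closed_bigI => i _; exact/closed_sub/cont_L.
have box : compact [set v : V | forall k, `[-M, M]%classic (v ord0 k)].
  by apply: (@rV_compact _ _ (fun _ => `[-M, M]%classic)) => _; exact: segment_compact.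
have Kr_c : compact Kr.
  apply: (subclosed_compact Kr_cl box) => z /= Kz k.
  have [Hx Hw] := HM _ _ Kz.
  rewrite /= in_itv /= -ler_norml.
  by case: (ord_cases k) => [[j ->]|->]; [exact: Hx | exact: Hw].
have Kr0 : Kr !=set0 by exists (mkrow xp wp); rewrite /Kr /= ex_mkrow ew_mkrow.
have [z zK zmin] := compact_EVT_min Kr0 Kr_c (continuous_subspaceT cont_F).
exists (ex z), (ew z); split; first by move: zK; rewrite inE.
move=> x w Kxw; have := zmin (mkrow x w); rewrite ex_mkrow ew_mkrow; apply.
by rewrite inE /Kr /= ex_mkrow ew_mkrow.
Qed.
End Compact.
Section Final.
Hypothesis hDs : forall j, j != ord0 -> D ord0 < D j.
Variable ybar : 'I_m -> R.
Hypothesis yb0 : forall i, 0 <= ybar i.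
Hypothesis ybs : 0 < \sum_i ybar i * xi i.
Hypothesis hsub : forall I : {set 'I_m}, (2 <= #|I|)%N -> (0 <= sub_val D c a b xi I)%E.

Definition setx (x : 'I_n.+1 -> R) u := fun j => if j == ord0 then u else x j.

Lemma sum_setx (F : 'I_n.+1 -> R -> R) x u :
  \sum_j F j (setx x u j) = F ord0 u + \sum_(j | j != ord0) F j (x j).
Proof.
rewrite (bigD1 ord0) //= /setx eqxx; congr (_ + _).
by apply: eq_bigr => j /negbTE ->.
Qed.

Lemma setx_id x : setx x (x ord0) = x.
Proof. by apply: funext => j; rewrite /setx; case: eqP => // ->. Qed.

Lemma Lc_setx i x u v : Lc i (setx x u) v =
  2 * a i ord0 * u + \sum_(j | j != ord0) 2 * a i j * x j + xi i * v - b i.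
Proof.
by rewrite /Lc (@sum_setx (fun j y => 2 * a i j * y)).
Qed.

Lemma g_setx x u v : gq (setx x u) v =
  2 * c ord0 * u + \sum_(j | j != ord0) ((D j - D0) * x j ^+ 2 + 2 * c j * x j) + D0 * v.
Proof.
rewrite /gq (@sum_setx (fun j y => (D j - D0) * y ^+ 2 + 2 * c j * y)).
by rewrite subrr mul0r add0r.
Qed.

Lemma main_le xp wp : inK xp wp -> (cstar D c a b xi <= (gq xp wp)%:E)%E.
Proof.
move=> Kp.
rewrite leNgt; apply/negP => gapE.
have gap : forall x, inP x (sq x) -> gq xp wp < gq x (sq x).
  move=> x Px; rewrite -lte_fin; apply: (lt_le_trans gapE).
  rewrite -qobj_g; apply: ereal_inf_lbound; exists x => //; exact/Pfeas_iff.
have [xs [ws [Ks mins]]] := @exists_min ybar yb0 ybs _ _ Kp.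
have gs : gq xs ws <= gq xp wp by apply: mins.
have minP : forall x w, inP x w -> gq xs ws <= gq x w.
  move=> x w Pxw; rewrite leNgt; apply/negP => lt.
  have ab := @above xp wp _ _ Kp gap Pxw (ltW (lt_le_trans lt gs)).
  by have := mins x w (conj Pxw (ltW ab)); rewrite leNgt lt.
have [mu [mu0 muact st_w st_x]] := @kkt xs ws Ks.1 minP.
pose L i u v := Lc i (setx xs u) v.
pose e i := 2 * a i ord0.
have Laff : forall i u v du dv t, L i (u + t * du) (v + t * dv) = L i u v + t * (e i * du + xi i * dv).
  by move=> i u v du dv t; rewrite /L /e !Lc_setx; ring.
have gslice : forall u v, (forall i, mu i != 0 -> L i u v = 0) -> gq (setx xs u) v = gq xs ws.
  move=> u v act.
  rewrite -{2}(setx_id xs) !g_setx.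
  have c0 : c ord0 = - \sum_i mu i * a i ord0 by have := st_x ord0; rewrite subrr mul0r add0r => /eqP; rewrite addr_eq0 => /eqP.
  have d0 : D0 = - \sum_i mu i * xi i by move/eqP: st_w; rewrite addr_eq0 => /eqP.
  have : \sum_i mu i * (L i u v - Lc i xs ws) = 0.
    apply: big1 => i _; case: (eqVneq (mu i) 0) => [->|mn]; first by rewrite mul0r.
    by rewrite act // muact // subrr mulr0.
  rewrite /L.
  under eq_bigr do rewrite Lc_setx -{2}(setx_id xs) Lc_setx.
  have -> : \sum_i mu i * (2 * a i ord0 * u + \sum_(j | j != ord0) 2 * a i j * xs j + xi i * v - b i -
      (2 * a i ord0 * xs ord0 + \sum_(j | j != ord0) 2 * a i j * xs j + xi i * ws - b i))
     = 2 * (u - xs ord0) * \sum_i mu i * a i ord0 + (v - ws) * \sum_i mu i * xi i.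
    rewrite !mulr_sumr -big_split /=; apply: eq_bigr => i _; ring.
  move=> h; rewrite c0 d0.
  apply/eqP; rewrite -subr_eq0; apply/eqP.
  transitivity (- (2 * (u - xs ord0) * \sum_i mu i * a i ord0 + (v - ws) * \sum_i mu i * xi i)); first ring.
  by rewrite h oppr0.
have Gbound : forall u v, Gd L mu u v -> u ^+ 2 < v.
  move=> u v [G1 G2].
  have gl := gslice u v G2.
  have Pn : inP (setx xs u) v by move=> i; exact: G1.
  have hle : gq (setx xs u) v <= gq xp wp by rewrite gl.
  have := @above xp wp _ _ Kp gap Pn hle.
  have : u ^+ 2 <= sq (setx xs u).
    rewrite /sq (@sum_setx (fun j y => y ^+ 2)) lerDl; apply: sumr_ge0 => j _; exact: sqr_ge0.
  by move=> h1 h2; apply: le_lt_trans h2.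
have G0 : Gd L mu (xs ord0) ws.
  split=> i; rewrite /L setx_id; first exact: Ks.1.
  exact: muact.
have [u [v [[G1 G2] cardI]]] := vertex Laff Gbound G0.
pose I := Act L u v.
have muI i : i \notin I -> mu i = 0.
  move=> iI; apply/eqP; apply: contraNT iI => mn; rewrite inE; apply/eqP; exact: G2.
have sumI (F : 'I_m -> R) : \sum_(i in I) mu i * F i = \sum_i mu i * F i.
  rewrite [RHS](bigID (fun i => i \in I)) /= [X in _ + X]big1 ?addr0 //.
  by move=> i /muI ->; rewrite mul0r.
have xmuE j : j != ord0 -> xmu D c a mu j = xs j.
  move=> jn; rewrite /xmu /d1.
  have Dp : D j - D0 != 0 by rewrite subr_eq0 gt_eqF // hDs.
  have h : c j + \sum_i a i j * mu i = - ((D j - D0) * xs j).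
    apply/eqP; rewrite -addr_eq0 addrC addrA; apply/eqP; rewrite -[RHS](st_x j).
    by congr (_ + _); apply: eq_bigr => i _; rewrite mulrC.
  by rewrite h opprK mulrC mulKf.
have Lsub i : L i u v = xi i * v + 2 * a i ord0 * u + 2 * \sum_(j | j != ord0) a i j * xmu D c a mu j - b i.
  rewrite /L Lc_setx; rewrite mulr_sumr.
  have -> : \sum_(j | j != ord0) 2 * (a i j * xmu D c a mu j) = \sum_(j | j != ord0) 2 * a i j * xs j.
    by apply: eq_bigr => j jn; rewrite xmuE // mulrA.
  ring.
have feas : sub_feas D c a b xi I mu u v.
  split; first exact: muI.
  split.
  - rewrite /d1; under eq_bigr do rewrite mulrC.
    by rewrite (sumI xi).
  - under eq_bigr do rewrite mulrC.
    by rewrite (sumI (fun i => a i ord0)); have := st_x ord0; rewrite subrr mul0r add0r.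
  - move=> i iI; apply/eqP; rewrite -subr_eq0 -Lsub; move: iI; rewrite inE; exact: id.
  - move=> i iI; rewrite -subr_le0 -Lsub; exact: G1.
  - move=> i _; exact: mu0.
have objneg : sub_obj D c a mu u v < 0.
  rewrite /sub_obj.
  have e1 : \sum_(j | j != ord0) xmu D c a mu j ^+ 2 + u ^+ 2 = sq (setx xs u).
    rewrite /sq (@sum_setx (fun j y => y ^+ 2)) addrC; congr (_ + _).
    by apply: eq_bigr => j jn; rewrite xmuE.
  rewrite e1 subr_lt0; apply: (@above xp wp _ _ Kp gap).
    by move=> i; exact: G1.
  by rewrite gslice.
have := hsub I cardI.
have : (sub_val D c a b xi I <= (sub_obj D c a mu u v)%:E)%E.
  by apply: ereal_inf_lbound; exists (mu, u, v).
move=> h1 h2.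
have := le_trans h2 h1; rewrite lee_fin leNgt objneg.
done.
Qed.
End Final.

End Main.

Lemma psd_diag (R : realType) n (M : 'M[R]_n.+1) j : psd M -> 0 <= M j j.
Proof.
move=> h; have := h (delta_mx j 0).
by rewrite trmx_delta -rowE -row_mul -colE !mxE.
Qed.

Theorem mainTheorem13 (R : realType) (n m : nat)
  (D c : 'I_n.+1 -> R) (a : 'I_m -> 'I_n.+1 -> R) (b xi : 'I_m -> R) :
  assumption1 a b xi ->
  (forall j : 'I_n.+1, j != ord0 -> D ord0 < D j) ->
  (forall I : {set 'I_m}, (2 <= #|I|)%N -> (0 <= sub_val D c a b xi I)%E) ->
  vstar D c a b xi = cstar D c a b xi.
Proof.
move=> [_ [ybar [yb0 ybs]] _] hDs hsub.
have hD : forall j, 0 <= D j - D ord0.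
  move=> j; case: (eqVneq j ord0) => [->|jn]; first by rewrite subrr.
  by rewrite subr_ge0 ltW // hDs.
apply: le_anti; apply/andP; split.
  apply/ereal_infP => _ [x Px <-].
  apply: ereal_inf_lbound; exists (x, outer x) => /=.
    split.
    - by apply/matrixP => i j; rewrite !mxE mulrC.
    - move=> i; have := Px i.
      suff -> : \tr (outer x) = \sum_j x j ^+ 2 by [].
      by rewrite /mxtrace; apply: eq_bigr => j _; rewrite mxE expr2.
    - move=> v; rewrite subrr mulmx0 mul0mx mxE.
      done.
  rewrite /shor_obj /qobj; congr (_ + _)%:E.
  by apply: eq_bigr => j _; rewrite mxE expr2.
apply/ereal_infP => _ [[x X] /= [XT Hc Hpsd] <-].
have diag j : x j ^+ 2 <= X j j.
  by have := @psd_diag R n _ j Hpsd; rewrite !mxE subr_ge0 expr2.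
have inKx : inK R n m a b xi x (\tr X).
  split.
    by move=> i; rewrite Lc_form subr_le0.
  by rewrite /sq /mxtrace; apply: ler_sum => j _; exact: diag.
apply: (le_trans (@main_le R n m D c a b xi hD hDs ybar yb0 ybs hsub _ _ inKx)).
rewrite lee_fin /shor_obj /gq /mxtrace.
rewrite -subr_ge0.
have -> : \sum_j D j * X j j + 2 * \sum_j c j * x j -
   (\sum_j ((D j - D ord0) * x j ^+ 2 + 2 * c j * x j) + D ord0 * \sum_j X j j)
   = \sum_j (D j - D ord0) * (X j j - x j ^+ 2).
  by rewrite !mulr_sumr -!big_split /= -sumrB; apply: eq_bigr => j _; ring.
by apply: sumr_ge0 => j _; apply: mulr_ge0 => //; rewrite subr_ge0.
Qed.
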